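(* In the setting above (data $\mathbf X_0,\mathbf X_1$ generated by $\dot{\mathbf x}=\mathscr A\mathbf x^{k-1}$ with $\mathscr A$ almost symmetric, so that $\mathbf X_1=\mathbf A_{(k)}\hat{\mathbf X}_0$), suppose $$\mathrm{rank}(\hat{\mathbf X}_0)=\sum_{j=1}^{\min\{n,k-1\}}\frac{n!}{j!(n-j)!}\cdot\frac{(k-2)!}{(j-1)!(k-j-1)!},$$ and let $\hat{\mathbf X}_0=\hat{\mathbf U}_0\hat{\boldsymbol\Sigma}_0\hat{\mathbf V}_0^\top$ be a compact singular value decomposition. Then $\mathbf A_{(k)}=\mathbf X_1\hat{\mathbf V}_0\hat{\boldsymbol\Sigma}_0^{+}\hat{\mathbf U}_0^\top$, where $\hat{\boldsymbol\Sigma}_0^{+}$ is the Moore–Penrose pseudoinverse; in particular this matrix is the $k$-mode matricization of an almost symmetric tensor.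
   Context: A cubical $k$th-order tensor $\mathscr A\in\mathbb R^{n\times\cdots\times n}$ is almost symmetric if its entries are invariant under every permutation of the first $k-1$ indices. The $k$-mode matricization $\mathbf A_{(k)}\in\mathbb R^{n\times n^{k-1}}$ is defined by $(\mathbf A_{(k)})_{j_k,c}=\mathscr A_{j_1\cdots j_k}$ with $c=j_1+\sum_{i=2}^{k-1}(j_i-1)n^{i-1}$; then $\mathscr A\mathbf x^{k-1}:=\mathscr A\times_1\mathbf x\cdots\times_{k-1}\mathbf x=\mathbf A_{(k)}\mathbf x^{[k-1]}$ with $\mathbf x^{[k-1]}$ the $(k-1)$-fold Kronecker power. $\hat{\mathbf X}_0=\mathbf X_0\odot\cdots\odot\mathbf X_0$ ($k-1$ factors) is the iterated Khatri–Rao (columnwise Kronecker) product of $\mathbf X_0=[\mathbf x(t_0),\dots,\mathbf x(t_0+(T-1)\tau)]\in\mathbb R^{n\times T}$, and $\mathbf X_1=[\dot{\mathbf x}(t_0),\dots,\dot{\mathbf x}(t_0+(T-1)\tau)]$. A compact SVD keeps only the nonzero singular values, so $\hat{\boldsymbol\Sigma}_0$ is square, diagonal, and invertible. *)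

(* Defs.v *)
From HB Require Import structures.
From mathcomp Require Import all_boot all_order all_algebra all_fingroup.
From mathcomp Require Import all_classical all_reals all_analysis.

Set Implicit Arguments.
Unset Strict Implicit.
Unset Printing Implicit Defensive.

Import Order.TTheory GRing.Theory Num.Theory.
Local Open Scope ring_scope.

(* A k-th order cubical tensor of size n x ... x n, indexed (0-based) by
   functions j : 'I_k -> 'I_n  (j i is the (i+1)-th index). *)
Definition tensor (R : Type) (k n : nat) := {ffun 'I_k -> 'I_n} -> R.

(* Almost symmetric: invariant under every permutation of the first k-1
   indices, i.e. every permutation of 'I_k fixing the last index k-1. *)
Definition almost_symmetric (R : Type) (k n : nat) (A : tensor R k n) : Prop :=
  forall s : 'S_k, (forall i : 'I_k, val i = k.-1 -> s i = i) ->
  forall j : {ffun 'I_k -> 'I_n}, A [ffun i => j (s i)] = A j.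

Lemma digit_subproof (n m : nat) (i : 'I_m) (c : 'I_(n ^ m)) :
  ((c %/ n ^ i) %% n < n)%N.
Proof.
case: n c => [|n'] c; last by rewrite ltn_mod.
move: (nat_of_ord c) (ltn_ord c) => c'.
by rewrite exp0n // (leq_ltn_trans (leq0n _) (ltn_ord i)).
Qed.

Definition digit (n m : nat) (i : 'I_m) (c : 'I_(n ^ m)) : 'I_n :=
  Ordinal (digit_subproof i c).

(* k-mode matricization: (A_(k))_{j_k, c} = A_{j_1 ... j_k} with
   c = j_1 + sum_{i=2}^{k-1} (j_i - 1) n^{i-1} (1-based); in 0-based form
   the digits of c in base n are j_1, ..., j_{k-1}. *)
Definition matricize (R : Type) (k n : nat) (A : tensor R k n)
  : 'M[R]_(n, n ^ k.-1) :=
  \matrix_(r < n, c < n ^ k.-1)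
    A [ffun i : 'I_k => if insub (val i) is Some i' then digit i' c else r].

(* Iterated Khatri-Rao (columnwise Kronecker) product X (.) ... (.) X
   with m factors: column t is the m-fold Kronecker power of column t. *)
Definition khatri_rao_pow (R : nzRingType) (m n T : nat) (X : 'M[R]_(n, T))
  : 'M[R]_(n ^ m, T) :=
  \matrix_(c < n ^ m, t < T) \prod_(i < m) X (digit i c) t.

Definition kron_pow (R : nzRingType) (m n : nat) (x : 'cV[R]_n) : 'cV[R]_(n ^ m) :=
  khatri_rao_pow m x.

Definition tensor_apply (R : nzRingType) (k n : nat) (A : tensor R k n)
  (x : 'cV[R]_n) : 'cV[R]_n :=
  matricize A *m kron_pow k.-1 x.

Definition compact_svd (R : realFieldType) (p q r : nat) (M : 'M[R]_(p, q))
  (U : 'M[R]_(p, r)) (S : 'M[R]_r) (V : 'M[R]_(q, r)) : Prop :=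
  [/\ U^T *m U = 1%:M, V^T *m V = 1%:M,
      exists s : 'rV[R]_r,
        [/\ S = diag_mx s, forall i, 0 < s 0 i &
            forall i j : 'I_r, (i <= j)%N -> s 0 j <= s 0 i]
    & M = U *m S *m V^T].

Definition mp_pinv (R : nzRingType) (p q : nat) (M : 'M[R]_(p, q))
  (P : 'M[R]_(q, p)) : Prop :=
  [/\ M *m P *m M = M, P *m M *m P = P,
      (M *m P)^T = M *m P & (P *m M)^T = P *m M].

(* Main.v *)
Require Import Defs.
From HB Require Import structures.
From mathcomp Require Import all_boot all_order all_algebra all_fingroup.
From mathcomp Require Import all_classical all_reals all_analysis.
From mathcomp Require Import zify.
Import Order.TTheory GRing.Theory Num.Theory.
Local Open Scope ring_scope.

Lemma digits_inj (n m c1 c2 : nat) : (c1 < n ^ m)%N -> (c2 < n ^ m)%N ->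
  (forall i, (i < m)%N -> (c1 %/ n ^ i %% n = c2 %/ n ^ i %% n)%N) -> c1 = c2.
Proof.
elim: m c1 c2 => [|m IH] c1 c2.
  by rewrite expn0 !ltnS !leqn0 => /eqP -> /eqP ->.
case: n IH => [|n'] IH; first by rewrite exp0n.
move=> h1 h2 H.
rewrite (divn_eq c1 n'.+1) (divn_eq c2 n'.+1).
have := H 0%N isT; rewrite expn0 !divn1 => ->.
congr (_ * _ + _)%N.
apply: IH.
- by rewrite ltn_divLR // -expnSr.
- by rewrite ltn_divLR // -expnSr.
move=> i hi; have := H i.+1 hi.
by rewrite expnS !divnMA.
Qed.

Definition dec {n m : nat} (c : 'I_(n ^ m)) : m.-tuple 'I_n :=
  [tuple digit i c | i < m].

Lemma dec_inj n m : injective (@dec n m).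
Proof.
move=> c1 c2 E; apply: val_inj; apply: (@digits_inj n m); [exact: ltn_ord | exact: ltn_ord | move=> i hi].
have := congr1 (fun t => val (tnth t (Ordinal hi))) E.
by rewrite /dec !tnth_mktuple.
Qed.

Lemma dec_card n m : (#|{: m.-tuple 'I_n}| <= #|'I_(n ^ m)|)%N.
Proof. by rewrite card_tuple !card_ord. Qed.

Definition enc {n m : nat} (t : m.-tuple 'I_n) : 'I_(n ^ m) :=
  iinv (inj_card_onto (@dec_inj n m) (dec_card n m) t).

Lemma encK n m (t : m.-tuple 'I_n) : dec (enc t) = t.
Proof. exact: f_iinv. Qed.

Definition ordr {n} : rel 'I_n := fun a b => (val a <= val b)%N.

Lemma ordr_total n : total (@ordr n).
Proof. move=> a b; exact: leq_total. Qed.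

Definition sidx {n m} (c : 'I_(n ^ m)) : 'I_(n ^ m) :=
  enc (sort_tuple (@ordr n) (dec c)).

Lemma sidx_perm n m (c : 'I_(n ^ m)) : perm_eq (dec (sidx c)) (dec c).
Proof. by rewrite /sidx encK /= perm_sort. Qed.

Lemma sidx_sorted n m (c : 'I_(n ^ m)) : sorted (@ordr n) (dec (sidx c)).
Proof. rewrite /sidx encK /=; exact: sort_sorted (@ordr_total n) _. Qed.

Definition Sset n m := [set c : 'I_(n ^ m) | sorted (@ordr n) (dec c)].

Lemma card_Sset n' m : (#|Sset n'.+1 m| <= 'C(m + n', m))%N.
Proof.
rewrite -card_sorted_tuples -(card_imset _ (@dec_inj _ _)).
apply: subset_leq_card; apply/fintype.subsetP => t /imsetP[c]; rewrite inE => hs ->.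
by rewrite sorted_map; move: hs; rewrite /Sset inE.
Qed.

Definition Fmx (R : nzRingType) n m : 'M[R]_(n ^ m) :=
  \matrix_(c', c) ((c' == sidx c)%:R).

Lemma mulmx_Fmx (R : nzRingType) p n m (B : 'M[R]_(p, n ^ m)) :
  (forall i c, B i (sidx c) = B i c) -> B *m Fmx R n m = B.
Proof.
move=> H; apply/matrixP => i c; rewrite !mxE (bigD1 (sidx c)) //= mxE eqxx mulr1.
rewrite big1 ?addr0 ?H // => c' hc'; by rewrite mxE (negbTE hc') mulr0.
Qed.

Lemma rank_Fmx (F : fieldType) n m : (\rank (Fmx F n m) <= #|Sset n m|)%N.
Proof.
pose G : 'M[F]_(n ^ m, #|Sset n m|) := \matrix_(c', s) ((c' == enum_val s)%:R).
pose H : 'M[F]_(#|Sset n m|, n ^ m) := \matrix_(s, c) ((enum_val s == sidx c)%:R).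
have -> : Fmx F n m = G *m H.
  apply/matrixP => c' c; rewrite !mxE.
  under eq_bigr do rewrite !mxE.
  rewrite -(big_enum_val (fun x => (c' == x)%:R * (x == sidx c)%:R)).
  have hin : sidx c \in Sset n m by rewrite inE sidx_sorted.
  rewrite (bigD1 (sidx c)) //= eqxx mulr1 big1 ?addr0 // => x /andP[_ hx].
  by rewrite (negbTE hx) mulr0.
exact: leq_trans (mxrankM_maxl _ _) (rank_leq_col _).
Qed.

Lemma kr_sidx (R : comNzRingType) m n T (X : 'M[R]_(n, T)) c t :
  khatri_rao_pow m X (sidx c) t = khatri_rao_pow m X c t.
Proof.
have E c0 : \prod_(i < m) X (digit i c0) t = \prod_(x <- dec c0) X x t.
  by rewrite big_tuple; apply: eq_bigr => i _; rewrite tnth_mktuple.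
rewrite !mxE !E; apply: perm_big; exact: sidx_perm.
Qed.

Lemma mat_sidx (R : Type) m n (A : tensor R m.+1 n) :
  almost_symmetric A -> forall r c, matricize A r (sidx c) = matricize A r c.
Proof.
move=> As r c.
have [p Hp] := elimT tuple_permP (sidx_perm _ _ c).
have Ht : dec (sidx c) = [tuple tnth (dec c) (p i) | i < m] by apply: val_inj.
have Hd i : digit i (sidx c) = digit (p i) c.
  by have := congr1 (fun t => tnth t i) Ht; rewrite /= !tnth_mktuple.
rewrite !mxE.
set j := [ffun i : 'I_m.+1 => _ ] in As *.
rewrite -(As (lift_perm ord_max ord_max p^-1) _ j); last first.
  move=> i hi; have -> : i = ord_max by apply: val_inj.
  exact: lift_perm_id.
congr (A _); apply/ffunP => i; rewrite !ffunE.
case: (unliftP ord_max i) => [i'|] ->.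
  by rewrite lift_perm_lift /= /bump !(leqNgt m) !ltn_ord /= !add0n !valK Hd permKV.
by rewrite lift_perm_id /= insubF //= ltnn.
Qed.
Lemma binsum_eq (n' m' : nat) :
  (\sum_(1 <= j < (minn n'.+1 m'.+1).+1) 'C(n'.+1, j) * 'C(m', j - 1))%N
  = 'C(m'.+1 + n', m'.+1).
Proof.
have hle : (1 <= (minn n'.+1 m'.+1).+1 <= m'.+2)%N by lia.
transitivity (\sum_(1 <= j < m'.+2) 'C(n'.+1, j) * 'C(m', j - 1))%N.
  rewrite (@big_cat_nat _ _ _ (minn n'.+1 m'.+1).+1 1 m'.+2) //=.
  rewrite [X in (_ = _ + X)%N]big_nat_cond [X in (_ = _ + X)%N]big1 ?addn0 //.
  move=> j /andP[/andP[h1 h2] _]; rewrite bin_small ?mul0n //; lia.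
have := binomial.Vandermonde n'.+1 m' m'.+1.
rewrite -(big_mkord xpredT (fun j => 'C(n'.+1, j) * 'C(m', m'.+1 - j))%N).
rewrite big_ltn // subn0 (@bin_small m' m'.+1) // muln0 add0n.
have -> : (n'.+1 + m' = m'.+1 + n')%N by lia.
move=> <-; apply: eq_big_nat => j /andP[h1 h2].
rewrite -(@bin_sub m' (j - 1)); last by lia.
congr (_ * 'C(_, _))%N; lia.
Qed.

Lemma key_lemma (R : fieldType) k n T r (A : tensor R k n) (X0 : 'M[R]_(n, T))
  (U : 'M[R]_(n ^ k.-1, r)) (S : 'M[R]_r) (V : 'M[R]_(T, r)) :
  (2 <= k)%N -> almost_symmetric A ->
  \rank (khatri_rao_pow k.-1 X0) =
    (\sum_(1 <= j < (minn n k.-1).+1) 'C(n, j) * 'C(k - 2, j - 1))%N ->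
  U^T *m U = 1%:M -> khatri_rao_pow k.-1 X0 = U *m S *m V^T ->
  matricize A *m U *m U^T = matricize A.
Proof.
case: k A U => [|[|m]] A U //= hk As Hr HU HM.
case: n A X0 U HU HM Hr As => [|n'] A X0 U HU HM Hr As.
  by apply/matrixP => -[i hi].
set M := khatri_rao_pow _ X0 in HM Hr.
set F := Fmx R n'.+1 m.+1.
have hM : M^T *m F = M^T.
  by apply: mulmx_Fmx => i c; rewrite ![M^T _ _]mxE; exact: kr_sidx.
have hA : matricize A *m F = matricize A.
  by apply: mulmx_Fmx => i c; exact: mat_sidx.
have sMF : (M^T <= F)%MS by rewrite -hM submxMl.
have sFM : (F <= M^T)%MS.
  rewrite -(mxrank_leqif_sup sMF).2 eqn_leq (mxrank_leqif_sup sMF).1 /=.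
  rewrite mxrank_tr Hr.
  apply: leq_trans (rank_Fmx _ _ _) _.
  apply: leq_trans (card_Sset _ _) _.
  have -> : (m.+2 - 2 = m)%N by lia.
  by rewrite binsum_eq.
have sAM : (matricize A <= M^T)%MS.
  by rewrite -hA; apply: submx_trans (submxMl _ _) sFM.
case/submxP: sAM => W HW.
by rewrite HW HM !trmx_mul trmxK -!mulmxA (mulmxA U^T) HU mul1mx.
Qed.

Theorem mainTheorem2 (R : realType) (n k T : nat) (A : tensor R k n)
  (x : R -> 'cV[R]_n) (t0 tau : R) (r : nat)
  (U : 'M[R]_(n ^ k.-1, r)) (S : 'M[R]_r) (V : 'M[R]_(T, r)) :
  (2 <= k)%N ->
  almost_symmetric A ->
  (* the trajectory solves  dx/dt = A x^{k-1} *)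
  (forall (t : R) (i : 'I_n), derivable (fun s => x s i 0) t 1) ->
  (forall t : R, \col_i derive1 (fun s => x s i 0) t = tensor_apply A (x t)) ->
  let X0 : 'M[R]_(n, T) := \matrix_(i, j) x (t0 + j%:R * tau) i 0 in
  let X1 : 'M[R]_(n, T) :=
    \matrix_(i, j) derive1 (fun s => x s i 0) (t0 + j%:R * tau) in
  let X0hat := khatri_rao_pow k.-1 X0 in
  \rank X0hat =
    (\sum_(1 <= j < (minn n k.-1).+1) 'C(n, j) * 'C(k - 2, j - 1))%N ->
  compact_svd X0hat U S V ->
  (exists P, mp_pinv S P) /\
  forall P : 'M[R]_r, mp_pinv S P ->
    matricize A = X1 *m V *m P *m U^T /\
    exists B : tensor R k n,
      almost_symmetric B /\ matricize B = X1 *m V *m P *m U^T.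
Proof.
move=> hk As _ Hode X0 X1 X0hat Hrank [HU HV [s [HS Hspos _]] HM].
have key := @key_lemma R k n T r A X0 U S V hk As Hrank HU HM.
have Sunit : S \in unitmx.
  rewrite HS unitmxE det_diag unitfE; apply/prodf_neq0 => i _; exact: lt0r_neq0.
split.
  exists (invmx S); split;
    by rewrite ?mulmxV ?mulVmx ?mul1mx ?mulmx1 ?trmx1.
move=> P [HP1 _ _ _].
have SP : S *m P = 1%:M.
  by rewrite -[S *m P]mulmx1 -(mulmxV Sunit) mulmxA HP1.
have X1E : X1 = matricize A *m X0hat.
  apply/matrixP => i j; rewrite !mxE.
  have := congr1 (fun v : 'cV_n => v i 0) (Hode (t0 + j%:R * tau)).
  rewrite /= mxE => ->; rewrite /tensor_apply mxE; apply: eq_bigr => c _.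
  rewrite !mxE; congr (_ * _); apply: eq_bigr => l _; rewrite mxE.
  by [].
have E : matricize A = X1 *m V *m P *m U^T.
  by rewrite X1E HM -!mulmxA (mulmxA V^T) HV mul1mx (mulmxA S) SP mul1mx mulmxA key.
split => //; exists A; split => //.
Qed.
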